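(* Let $R$ be a commutative ring, $n\ge 1$, and $I$ an $n$-absorbing ideal of $R$. If $I_1,\dots,I_{n+1}$ are u-ideals of $R$ with $I_1I_2\cdots I_{n+1}\subseteq I$, then $I$ contains the product of some $n$ of the ideals $I_1,\dots,I_{n+1}$.
   Context: All rings are commutative with identity $1\neq 0$. An ideal $I$ of $R$ is $n$-absorbing if whenever $x_1,\dots,x_{n+1}\in R$ and $x_1x_2\cdots x_{n+1}\in I$, the product of some $n$ of the $x_i$'s lies in $I$. An ideal $J$ of $R$ is a u-ideal if whenever $J\subseteq J_1\cup\cdots\cup J_m$ for finitely many ideals $J_1,\dots,J_m$ of $R$, then $J\subseteq J_i$ for some $i$. *)

(* Defs.v *)
From mathcomp Require Import all_boot all_algebra.
Set Implicit Arguments. Unset Strict Implicit. Unset Printing Implicit Defensive.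
Import GRing.Theory.
Local Open Scope ring_scope.

Definition is_ideal (R : comNzRingType) (I : R -> Prop) : Prop :=
  [/\ I 0,
      (forall x y, I x -> I y -> I (x + y)) &
      (forall r x, I x -> I (r * x))].

Definition idealMul (R : comNzRingType) (I J : R -> Prop) : R -> Prop :=
  fun z => exists (m : nat) (a b : 'I_m -> R),
    (forall k, I (a k) /\ J (b k)) /\ z = \sum_(k < m) a k * b k.

(* Product of a finite list of ideals (the empty product is R itself). *)
Definition idealProd (R : comNzRingType) (s : seq (R -> Prop)) : R -> Prop :=
  foldr (@idealMul R) (fun _ => True) s.

Definition subset_of (R : comNzRingType) (A B : R -> Prop) : Prop :=
  forall x, A x -> B x.

Definition n_absorbing (R : comNzRingType) (n : nat) (I : R -> Prop) : Prop :=
  is_ideal I /\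
  forall x : 'I_n.+1 -> R, I (\prod_(i < n.+1) x i) ->
    exists j : 'I_n.+1, I (\prod_(i < n.+1 | i != j) x i).

Definition u_ideal (R : comNzRingType) (J : R -> Prop) : Prop :=
  is_ideal J /\
  forall (m : nat) (Js : 'I_m -> (R -> Prop)),
    (forall i, is_ideal (Js i)) ->
    (forall x, J x -> exists i, Js i x) ->
    exists i, subset_of J (Js i).

(* Main.v *)
Require Import Defs.
From mathcomp Require Import all_boot all_algebra.
From Stdlib Require Import Classical.
Set Implicit Arguments. Unset Strict Implicit. Unset Printing Implicit Defensive.
Import GRing.Theory.
Local Open Scope ring_scope.

Section S.
Variables (R : comNzRingType) (n : nat) (I : R -> Prop) (Is : 'I_n.+1 -> (R -> Prop)).
Hypothesis HI : is_ideal I.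
Hypothesis HIs : forall i, is_ideal (Is i).

Definition tot (b : 'I_n.+1 -> R) := forall i, Is i (b i).
Definition mix (s : seq 'I_n.+1) (a b : 'I_n.+1 -> R) :=
  fun i => if i \in s then b i else a i.
Definition upd (f : 'I_n.+1 -> R) t x := fun i => if i == t then x else f i.

Lemma tot0 : tot (fun _ => 0).
Proof. by move=> i; case: (HIs i). Qed.

Lemma tot_upd b t x : tot b -> Is t x -> tot (upd b t x).
Proof. by move=> Hb Hx i; rewrite /upd; case: eqP => [->|_]. Qed.

Lemma I_sum (m : nat) (F : 'I_m -> R) : (forall k, I (F k)) -> I (\sum_(k < m) F k).
Proof.
move=> H; case: HI => H0 HD HM.
by apply: (big_ind I) => // x y; apply: HD.
Qed.

Lemma prodA (s : seq 'I_n.+1) b : tot b ->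
  idealProd [seq Is i | i <- s] (\prod_(i <- s) b i).
Proof.
move=> Hb; elim: s => [|i s IH] /=; first by [].
rewrite big_cons; exists 1%N, (fun _ => b i), (fun _ => \prod_(j <- s) b j).
split; first by move=> k; split.
by rewrite big_ord1.
Qed.

Lemma prodB (s : seq 'I_n.+1) : uniq s -> forall c,
  (forall b, tot b -> I (c * \prod_(i <- s) b i)) ->
  forall z, idealProd [seq Is i | i <- s] z -> I (c * z).
Proof.
case: HI => H0 HD HM.
elim: s => [|i s IH] /= Hu c Hc z Hz.
  have := Hc _ tot0; rewrite big_nil mulr1 => Ic.
  by rewrite mulrC; apply: HM.
case/andP: Hu => Hi Hu.
case: Hz => m [a [bb [Hab ->]]].
rewrite mulr_sumr; apply: I_sum => k.
rewrite mulrA; apply: (IH Hu); last by case: (Hab k).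
move=> b Hb.
have Hb' : tot (upd b i (a k)) by apply: tot_upd => //; case: (Hab k).
have := Hc _ Hb'; rewrite big_cons {1}/upd eqxx.
have -> : \prod_(j <- s) upd b i (a k) j = \prod_(j <- s) b j.
  apply: eq_big_seq => j js; rewrite /upd; case: eqP => // Eji.
  by move: Hi; rewrite -Eji js.
by rewrite mulrA.
Qed.

Hypothesis HA : forall x : 'I_n.+1 -> R, I (\prod_(i < n.+1) x i) ->
    exists j : 'I_n.+1, I (\prod_(i < n.+1 | i != j) x i).
Hypothesis Hu : forall i, u_ideal (Is i).

Lemma L1 s' t a b x i : t \notin s' ->
  mix s' (upd a t x) b i = mix (t :: s') a (upd b t x) i.
Proof.
move=> Ht; rewrite /mix /upd in_cons; case: (i =P t) => [->|ne] //=.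
by rewrite (negbTE Ht).
Qed.

Lemma L2 s' t a b i : t \notin s' ->
  mix s' (upd a t (b t)) b i = mix (t :: s') a b i.
Proof.
move=> Ht; rewrite /mix /upd in_cons; case: (i =P t) => [->|ne] //=.
by rewrite (negbTE Ht).
Qed.

Lemma L3 s' t a b x i : i != t ->
  mix s' (upd a t x) b i = mix (t :: s') a b i.
Proof. by move=> it; rewrite /mix /upd in_cons (negbTE it). Qed.

Lemma split_prod s' t a b x (j : 'I_n.+1) : t \notin s' -> j != t ->
  \prod_(i | i != j) mix s' (upd a t x) b i =
  x * \prod_(i | (i != j) && (i != t)) mix s' a b i.
Proof.
move=> Ht jt; rewrite (bigD1 t) /=; last by rewrite eq_sym.
rewrite {1}/mix /upd (negbTE Ht) eqxx; congr (x * _).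
by apply: eq_bigr => i /andP [_ it]; rewrite /mix /upd (negbTE it).
Qed.

Lemma core (s : seq 'I_n.+1) : uniq s -> forall a,
  (forall b, tot b -> I (\prod_(i < n.+1) mix s a b i)) ->
  exists j : 'I_n.+1, forall b, tot b -> I (\prod_(i < n.+1 | i != j) mix s a b i).
Proof.
case: HI => H0 HD HM.
elim: s => [|t s' IH] /= Hus a H.
  have := H _ tot0.
  have E : forall b, \prod_(i < n.+1) mix [::] a b i = \prod_(i < n.+1) a i.
    by move=> b; apply: eq_bigr => i _; rewrite /mix in_nil.
  rewrite E => /HA [j Hj]; exists j => b _.
  by rewrite (eq_bigr a) // => i _; rewrite /mix in_nil.
case/andP: Hus => Ht Hus.
have Hx : forall x, Is t x -> exists j, forall b, tot b ->
    I (\prod_(i | i != j) mix s' (upd a t x) b i).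
  move=> x Ix; apply: (IH Hus) => b Hb.
  rewrite (eq_bigr _ (fun i _ => L1 a b x i Ht)).
  by apply: H; apply: tot_upd.
pose Pt := forall b, tot b -> I (\prod_(i | i != t) mix (t :: s') a b i).
case: (classic Pt) => HPt; first by exists t.
have jxt : forall x, Is t x -> forall j, (forall b, tot b ->
    I (\prod_(i | i != j) mix s' (upd a t x) b i)) -> j != t.
  move=> x Ix j Hj; apply/eqP => Ejt; apply: HPt => b Hb.
  have := Hj b Hb; rewrite Ejt.
  by rewrite (eq_bigr _ (fun i it => L3 s' a b x it)).
have I0 : Is t 0 by case: (HIs t).
have [j0 Hj0] := Hx 0 I0.
have j0t := jxt 0 I0 j0 Hj0.
pose C j b := \prod_(i | (i != j) && (i != t)) mix s' a b i.
pose J j := fun x => forall b, tot b -> I (x * C j b).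
have HJ : forall j, is_ideal (J j).
  move=> j; split.
  - by move=> b _; rewrite mul0r.
  - by move=> x y Hx' Hy' b Hb; rewrite mulrDl; apply: HD; [apply: Hx' | apply: Hy'].
  - by move=> r x Hx' b Hb; rewrite -mulrA; apply: HM; apply: Hx'.
pose f j := if j == t then j0 else j.
have ft : forall j, f j != t.
  move=> j; rewrite /f; case: (j =P t) => [_|/eqP //]; exact: j0t.
case: (Hu t) => _ /(_ _ (fun j => J (f j)) (fun j => HJ (f j))) [].
  move=> x Ix; have [j Hj] := Hx x Ix; have jt := jxt x Ix j Hj.
  exists j; rewrite /f (negbTE jt) => b Hb.
  by rewrite -(split_prod _ _ _ Ht jt); apply: Hj.
move=> j Hsub; exists (f j) => b Hb.
have := Hsub (b t) (Hb t) b Hb.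
rewrite -(split_prod _ _ _ Ht (ft j)).
by rewrite (eq_bigr _ (fun i _ => L2 a b i Ht)).
Qed.

End S.

Theorem lemma6 (R : comNzRingType) (n : nat) (I : R -> Prop)
  (Is : 'I_n.+1 -> (R -> Prop)) :
  (1 <= n)%N ->
  n_absorbing n I ->
  (forall i, u_ideal (Is i)) ->
  subset_of (idealProd [seq Is i | i <- enum 'I_n.+1]) I ->
  exists j : 'I_n.+1,
    subset_of (idealProd [seq Is i | i <- enum 'I_n.+1 & i != j]) I.
Proof.
move=> _ [HI HA] Hu Hsub.
have HIs : forall i, is_ideal (Is i) by move=> i; case: (Hu i).
have Hall : forall b, tot Is b ->
    I (\prod_(i < n.+1) mix (enum 'I_n.+1) (fun _ => 0) b i).
  move=> b Hb; apply: Hsub.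
  have := @prodA R n Is (enum 'I_n.+1) b Hb.
  rewrite big_enum /= (eq_bigr (mix (enum 'I_n.+1) (fun _ => 0) b)) //.
  by move=> i _; rewrite /mix mem_enum.
have [j Hj] := core HI HIs HA Hu (enum_uniq 'I_n.+1) Hall.
exists j => z Hz.
rewrite -[z]mul1r; apply: (prodB HI HIs (filter_uniq _ (enum_uniq _))) Hz.
move=> b Hb; rewrite mul1r big_filter big_enum_cond /=.
have E : \prod_(i < n.+1 | i != j) mix (enum 'I_n.+1) (fun _ => 0) b i =
  \prod_(i < n.+1 | i != j) b i by apply: eq_bigr => i _; rewrite /mix mem_enum.
by rewrite -E; apply: Hj.
Qed.
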